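(* Let $F_1,F_2:X\rightrightarrows Y$ be upper $K$-convex set-valued maps whose values are all $K$-sequentially compact. Suppose that $F_1$ (or $F_2$) is continuous at some point of $X$, or that $X$ is finite dimensional. Then for every $\bar x\in X$ and every $y^*\in K^+\setminus\{0\}$, $$y^*\big(\widehat\partial(F_1+F_2)(\bar x)\big)\subset\widehat\partial(y^*\circ F_1)(\bar x)+\widehat\partial(y^*\circ F_2)(\bar x).$$
   Context: $X,Y$ are real normed spaces with duals $X^*,Y^*$; $B(X,Y)$ is the space of bounded linear operators $X\to Y$; $B(x,\delta)$ is the open ball and $D_Y$ the closed unit ball. $K\subset Y$ is a pointed closed convex cone and $K^+=\{y^*\in Y^*: y^*(k)\ge0\ \forall k\in K\}$. All set-valued maps have nonempty values; $(F_1+F_2)(x)=F_1(x)+F_2(x)$. For $F:X\rightrightarrows Y$ and $\bar x\in X$, $\widehat\partial F(\bar x)$ is the set of all $T\in B(X,Y)$ such that for every $\varepsilon>0$ there is $\delta>0$ with $F(x)+K\subset F(\bar x)+K+T(x-\bar x)+\varepsilon\|x-\bar x\|D_Y$ for all $x\in B(\bar x,\delta)$; this is also applied to maps $G:X\rightrightarrows\mathbb R$ with $Y=\mathbb R$, $K=[0,\infty)$ (so $\widehat\partial G(\bar x)\subset X^*$). For $y^*\in Y^*$, $y^*\circ F$ is $x\mapsto\{y^*(y):y\in F(x)\}$, and for $\mathcal T\subset B(X,Y)$, $y^*(\mathcal T)=\{y^*\circ T:T\in\mathcal T\}$. $F$ is upper $K$-convex if $\lambda F(x)+(1-\lambda)F(y)\subset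 F(\lambda x+(1-\lambda)y)+K$ for all $x,y\in X$, $\lambda\in(0,1)$. A nonempty $A\subset Y$ is $K$-sequentially compact if for every $(a_n)\subset A$ there is $(c_n)\subset K$ such that $(a_n-c_n)$ has a subsequence converging to an element of $A$. $F$ is continuous at $x$ if it is both lower continuous (for every open $V$ with $F(x)\cap V\ne\emptyset$ there is a neighborhood $U$ of $x$ with $F(u)\cap V\neq\emptyset$ for $u\in U$) and upper continuous (for every open $V\supset F(x)$ there is a neighborhood $U$ of $x$ with $F(u)\subset V$ for $u\in U$) at $x$. *)

(* Defs.v *)
From HB Require Import structures.
From mathcomp Require Import all_boot all_order all_algebra.
From mathcomp Require Import all_classical all_reals all_analysis.
Set Implicit Arguments. Unset Strict Implicit. Unset Printing Implicit Defensive.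
Import Order.TTheory GRing.Theory Num.Theory.
Import numFieldNormedType.Exports.
Local Open Scope classical_set_scope.
Local Open Scope ring_scope.

Section Defs.
Context {R : realType}.

Definition blin {X Y : normedModType R} (T : X -> Y) : Prop :=
  (forall x y, T (x + y) = T x + T y) /\
  (forall (a : R) x, T (a *: x) = a *: T x) /\ continuous T.

Definition pointed_closed_convex_cone {Y : normedModType R} (K : set Y) : Prop :=
  closed K /\ K 0 /\ (forall k t, K k -> 0 <= t -> K (t *: k)) /\
  (forall k1 k2, K k1 -> K k2 -> K (k1 + k2)) /\
  (forall k, K k -> K (- k) -> k = 0).

Definition dual_cone {Y : normedModType R} (K : set Y) : set (Y -> R) :=
  [set ys : Y -> R | blin ys /\ forall k, K k -> 0 <= ys k].

Definition smap_add {X Y : normedModType R} (F1 F2 : X -> set Y) : X -> set Y :=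
  fun x => [set y | exists a b, F1 x a /\ F2 x b /\ y = a + b].

Definition scomp {X Y : normedModType R} (ys : Y -> R) (F : X -> set Y) : X -> set R :=
  fun x => ys @` F x.

(* Frechet-type subdifferential \hat\partial F(xb) w.r.t. the cone K:
   T in B(X,Y) s.t. for every eps>0 there is delta>0 with
   F(x)+K \subset F(xb)+K+T(x-xb)+eps||x-xb|| D_Y for all x in B(xb,delta) *)
Definition hatsub {X Y : normedModType R} (K : set Y) (F : X -> set Y) (xb : X)
  : set (X -> Y) :=
  [set T | blin T /\
    forall eps : R, 0 < eps -> exists2 delta : R, 0 < delta &
      forall x, `|x - xb| < delta ->
        forall y k, F x y -> K k ->
          exists y' k' b, F xb y' /\ K k' /\ `|b| <= 1 /\
            y + k = y' + k' + T (x - xb) + (eps * `|x - xb|) *: b].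

Definition Rplus_cone : set R := [set r | 0 <= r].

Definition upper_Kconvex {X Y : normedModType R} (K : set Y) (F : X -> set Y) : Prop :=
  forall x y (l : R), 0 < l < 1 -> forall a b, F x a -> F y b ->
    exists c k, F (l *: x + (1 - l) *: y) c /\ K k /\
      l *: a + (1 - l) *: b = c + k.

Definition Kseq_compact {Y : normedModType R} (K : set Y) (A : set Y) : Prop :=
  A !=set0 /\
  forall a : nat -> Y, (forall n, A (a n)) ->
    exists c : nat -> Y, (forall n, K (c n)) /\
      exists phi : nat -> nat, {homo phi : m n / (m < n)%N >-> (m < n)%N} /\
        exists2 l, A l & (fun n => a (phi n) - c (phi n)) @ \oo --> l.

Definition lower_cont {X Y : normedModType R} (F : X -> set Y) (x : X) : Prop :=
  forall V : set Y, open V -> F x `&` V !=set0 ->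
    exists2 U, nbhs x U & forall u, U u -> F u `&` V !=set0.
Definition upper_cont {X Y : normedModType R} (F : X -> set Y) (x : X) : Prop :=
  forall V : set Y, open V -> F x `<=` V ->
    exists2 U, nbhs x U & forall u, U u -> F u `<=` V.
Definition smap_cont {X Y : normedModType R} (F : X -> set Y) (x : X) : Prop :=
  lower_cont F x /\ upper_cont F x.

Definition findim (X : normedModType R) : Prop :=
  exists (n : nat) (e : 'I_n -> X),
    forall x, exists c : 'I_n -> R, x = \sum_(i < n) c i *: e i.

End Defs.

(* Main.v *)
Require Import Defs.
Set Warnings "-notation-overridden -ambiguous-paths -notation-incompatible-prefix".
From HB Require Import structures.
From mathcomp Require Import all_boot all_order all_algebra.
From mathcomp Require Import all_classical all_reals all_analysis.
From mathcomp Require Import ring lra.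
Require Import Defs.
Import Order.TTheory GRing.Theory Num.Theory.
Set Implicit Arguments. Unset Strict Implicit. Unset Printing Implicit Defensive.
Import numFieldNormedType.Exports.
Local Open Scope classical_set_scope.
Local Open Scope ring_scope.
Section HBsec.
Variables (R : realType) (X : lmodType R) (Phi : X -> X -> R).
Hypothesis PhiC : forall lam : R, 0 < lam < 1 -> forall p q p' q',
  Phi (lam *: p + (1 - lam) *: p') (lam *: q + (1 - lam) *: q')
    <= lam * Phi p q + (1 - lam) * Phi p' q'.
Hypothesis Phi0 : forall v, 0 <= Phi 0 v.

Definition hbgood (G : set (X * R)) :=
  [/\ (forall c p q, G p -> G q -> G (c *: p.1 + q.1, c * p.2 + q.2)),
      (forall r, G (0, r) -> r = 0) &
      (forall p, G p -> forall v, p.2 <= Phi p.1 v)].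

Lemma hbgood_chain (F : set (set (X * R))) :
  F `<=` hbgood -> total_on F subset -> hbgood (\bigcup_(A in F) A).
Proof.
move=> FP Ftot; split.
- move=> c p q [A FA Ap] [B FB Bq].
  have [AB|BA] := Ftot _ _ FA FB.
  + exists B => //; have [+ _ _] := FP _ FB; apply => //; exact: AB.
  + exists A => //; have [+ _ _] := FP _ FA; apply => //; exact: BA.
- by move=> r [A FA Ar]; have [_ + _] := FP _ FA; apply.
- by move=> p [A FA Ap]; have [_ _ +] := FP _ FA; apply.
Qed.

Lemma hb_key (A : set (X * R)) u0 : hbgood A -> A (0, 0) ->
  forall u r t v u' r' s v', A (u, r) -> A (u', r') -> 0 < t -> 0 < s ->
  (r' - Phi (u' - s *: u0) v') / s <= (Phi (u + t *: u0) v - r) / t.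
Proof.
move=> [Acl Afun Adom] A0 u r t v u' r' s v' Aur Aur' t0 s0.
have st0 : 0 < s + t by rewrite addr_gt0.
pose lam := s / (s + t).
have lam01 : 0 < lam < 1.
  rewrite divr_gt0 //= ltr_pdivrMr // mul1r ltrDl //.
have e1 : 1 - lam = t / (s + t).
  by rewrite /lam; field; rewrite gt_eqF.
have Aq : A ((1 - lam) *: u' + 0, (1 - lam) * r' + 0).
  exact: (Acl _ (u', r') (0, 0)).
have Aw := Acl lam (u, r) _ Aur Aq.
have := Adom _ Aw (lam *: v + (1 - lam) *: v') => /=.
have -> : lam *: u + ((1 - lam) *: u' + 0) =
    lam *: (u + t *: u0) + (1 - lam) *: (u' - s *: u0).
  rewrite addr0 !scalerDr !scalerN !scalerA.
  have -> : lam * t = (1 - lam) * s by rewrite e1 /lam; field; rewrite gt_eqF.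
  by rewrite addrACA subrr addr0 addrC. 
move=> /le_trans /(_ (PhiC lam01 _ _ _ _)).
rewrite addr0 e1 /lam => H.
have H2 : s * r + t * r' <= s * Phi (u + t *: u0) v + t * Phi (u' - s *: u0) v'.
  have E1 : forall a b : R, s / (s+t) * a + t/(s+t) * b = (s*a + t*b) / (s+t).
    by move=> a b; field; rewrite gt_eqF.
  by move: H; rewrite !E1 ler_pM2r ?invr_gt0.
rewrite ler_pdivrMr // mulrAC ler_pdivlMr //.
by rewrite !mulrBl; nra.
Qed.
End HBsec.
Section HBsec2.
Variables (R : realType) (X : lmodType R) (Phi : X -> X -> R).
Hypothesis PhiC : forall lam : R, 0 < lam < 1 -> forall p q p' q',
  Phi (lam *: p + (1 - lam) *: p') (lam *: q + (1 - lam) *: q')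
    <= lam * Phi p q + (1 - lam) * Phi p' q'.
Hypothesis Phi0 : forall v, 0 <= Phi 0 v.

Lemma hb_ext (A : set (X * R)) u0 : hbgood Phi A -> A (0, 0) ->
  ~ (exists r, A (u0, r)) -> exists B, hbgood Phi B /\ A `<` B.
Proof.
move=> Ag A0 nA; have key := hb_key PhiC u0 Ag A0.
have [Acl Afun Adom] := Ag.
pose L := [set x | exists u r s v, [/\ A (u, r), 0 < s &
  x = (r - Phi (u - s *: u0) v) / s]].
have L0 : L !=set0.
  by exists ((0 - Phi (0 - 1 *: u0) 0) / 1); exists 0, 0, 1, 0.
have Lub : ubound L ((Phi (0 + 1 *: u0) 0 - 0) / 1).
  by move=> x [u [r [s [v [Aur s0 ->]]]]]; exact: key.
pose a := sup L.
have Ha1 : forall x, L x -> x <= a.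
  by move=> x Lx; apply: ub_le_sup => //; exists ((Phi (0 + 1 *: u0) 0 - 0) / 1).
have Ha2 : forall u r t v, A (u, r) -> 0 < t -> a <= (Phi (u + t *: u0) v - r) / t.
  by move=> u r t v Aur t0; apply: ge_sup => // x [u' [r' [s [v' [Aur' s0 ->]]]]]; exact: key.
pose B := [set p | exists u r t, A (u, r) /\ p = (u + t *: u0, r + t * a)].
exists B; split; last first.
  split.
    by move=> [u r] Aur; exists u, r, 0; rewrite scale0r mul0r !addr0.
  move=> /(_ (u0, a)) BA; apply: nA; exists a; apply: BA.
  by exists 0, 0, 1; rewrite scale1r mul1r !add0r.
split.
- move=> c _ _ [u [r [t [Aur ->]]]] [u' [r' [t' [Aur' ->]]]] /=.
  exists (c *: u + u'), (c * r + r'), (c * t + t'); split; first exact: (Acl c (u, r) (u', r')).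
  congr (_, _); last by ring.
  by rewrite !scalerDr !scalerA scalerDl addrACA.
- move=> r0 [u [r [t [Aur [e1 e2]]]]].
  have [t0|tn0] := eqVneq t 0.
    move: e1 e2; rewrite t0 scale0r mul0r !addr0 => e1 e2.
    by rewrite e2; apply: Afun; rewrite e1.
  exfalso; apply: nA; exists (- t^-1 * r + 0).
  have := Acl (- t^-1) (u, r) (0, 0) Aur A0; congr A; congr (_, _) => /=.
  have -> : u = - (t *: u0) by apply/eqP; rewrite -addr_eq0 e1.
  by rewrite addr0 scalerN scalerA mulNr scaleNr opprK mulVf // scale1r.
- move=> _ [u [r [t [Aur ->]]]] v /=.
  have [tn|t0|t0] := ltgtP t 0.
  + have Lx : L ((r - Phi (u - (- t) *: u0) v) / (- t)).
      by exists u, r, (- t), v; split => //; rewrite oppr_gt0.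
    have := Ha1 _ Lx; rewrite scaleNr opprK ler_pdivrMr ?oppr_gt0 //.
    by rewrite mulrN mulrC; lra.
  + have := Ha2 u r t v Aur t0; rewrite ler_pdivlMr // mulrC; lra.
  + by rewrite t0 scale0r mul0r !addr0; apply: (Adom (u, r)).
Qed.

Lemma hahn_banach_conv : exists l : X -> R,
  (forall c u u', l (c *: u + u') = c * l u + l u') /\ forall u v, l u <= Phi u v.
Proof.
have [A [Ag Amax]] := Zorn_bigcup (hbgood_chain (Phi := Phi)).
have A0 : A (0, 0).
  have [[p Ap]|Ae] := pselect (A !=set0).
    have [Acl _ _] := Ag; have := Acl (-1) p p Ap Ap.
    by rewrite scaleN1r mulN1r !addNr.
  exfalso; apply: (Amax [set (0, 0)]).
    split; first by move=> p Ap; exfalso; apply: Ae; exists p.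
    by move=> H; apply: Ae; exists (0, 0); exact: H.
  split.
  - by move=> c _ _ -> -> /=; rewrite scaler0 mulr0 !addr0.
  - by move=> r [].
  - by move=> _ -> v /=.
have tot : forall u, exists r, A (u, r).
  move=> u; apply: contrapT => nA.
  have [B [Bg AB]] := hb_ext Ag A0 nA; exact: Amax AB Bg.
pose l u := projT1 (cid (tot u)).
have Al : forall u, A (u, l u) by move=> u; exact: (projT2 (cid (tot u))).
have [Acl Afun Adom] := Ag.
exists l; split; last by move=> u v; exact: (Adom (u, l u)).
move=> c u u'; have := Acl c _ _ (Al u) (Al u') => /= Ac.
have := Acl (-1) _ _ (Al (c *: u + u')) Ac => /=.
rewrite scaleN1r addNr mulN1r => /Afun /eqP.
by rewrite addrC subr_eq0 => /eqP.
Qed.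
End HBsec2.
Section FinDim.
Variables (R : realType) (X : normedModType R).

Definition fspan n (e : 'I_n -> X) : set X :=
  [set x | exists c : 'I_n -> R, x = \sum_(i < n) c i *: e i].

Lemma fspan_lin n (e : 'I_n -> X) k x y : fspan e x -> fspan e y -> fspan e (k *: x + y).
Proof.
move=> [c ->] [d ->]; exists (fun i => k * c i + d i).
rewrite scaler_sumr -big_split /=; apply: eq_bigr => i _.
by rewrite scalerDl scalerA.
Qed.

Lemma fspan0 n (e : 'I_n -> X) : fspan e 0.
Proof. by exists (fun=> 0); rewrite big1 // => i _; rewrite scale0r. Qed.

Lemma fspan_recl n (e : 'I_n.+1 -> X) x :
  fspan e x <-> exists t s, fspan (e \o lift ord0) s /\ x = t *: e ord0 + s.
Proof.
split.
  move=> [c ->]; exists (c ord0), (\sum_(i < n) c (lift ord0 i) *: e (lift ord0 i)).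
  by split; [exists (c \o lift ord0) | rewrite big_ord_recl].
move=> [t [s [[c ->] ->]]].
exists (fun i => if unlift ord0 i is Some j then c j else t).
by rewrite big_ord_recl unlift_none; congr (_ + _); apply: eq_bigr => i _; rewrite liftK.
Qed.

Lemma sep_bound (S : set X) e0 (d : R) :
  (forall k x y, S x -> S y -> S (k *: x + y)) -> S 0 ->
  (forall s, S s -> d <= `|e0 - s|) -> 0 <= d ->
  forall t s, S s -> `|t| * d <= `|t *: e0 + s|.
Proof.
move=> Slin S0 Hd d0 t s Ss.
have [->|t0] := eqVneq t 0; first by rewrite normr0 mul0r.
have -> : t *: e0 + s = t *: (e0 - (- t^-1 *: s)).
  by rewrite scalerDr scalerN scalerA mulrN mulfV // scaleN1r opprK.
rewrite normrZ ler_wpM2l //; apply: Hd.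
by have := Slin (- t^-1) s 0 Ss S0; rewrite addr0.
Qed.

Lemma le0_norm_eps (x : X) : (forall eps : R, 0 < eps -> `|x| <= eps) -> x = 0.
Proof.
move=> H; apply/normr0_eq0/eqP; rewrite eq_le normr_ge0 andbT.
by apply/ler_addgt0Pr => e e0; rewrite add0r; apply: H.
Qed.
Lemma vec_id1 (z x s e0 : X) (a t : R) : s = x - a *: e0 ->
  z - t *: e0 - s = (z - x) + (a - t) *: e0.
Proof.
move=> ->; rewrite scalerBl opprB addrA [z - x + _]addrA.
by rewrite -!addrA; congr (_ + _); rewrite addrC [a *: e0 + _]addrC -addrA.
Qed.
End FinDim.
Section FinDim2.
Variables (R : realType) (X : normedModType R).

Lemma closed_extend (S : set X) e0 (d : R) : closed S ->
  (forall k x y, S x -> S y -> S (k *: x + y)) -> S 0 -> 0 < d ->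
  (forall s, S s -> d <= `|e0 - s|) ->
  closed [set x | exists t s, S s /\ x = t *: e0 + s].
Proof.
move=> Scl Slin S0 d0 Hd; set T := [set x | _] => z clz.
pose tau x := xget 0 [set t | exists s, S s /\ x = t *: e0 + s].
have tauP : forall x, T x -> exists2 s, S s & x = tau x *: e0 + s.
  move=> x [t [s [Ss ex]]].
  have [s' [Ss' ex']] := xgetPex 0 (ex_intro (fun t => exists s, S s /\ x = t *: e0 + s) t (ex_intro _ s (conj Ss ex))).
  by exists s'.
have bnd : forall x, T x -> `|tau x| * d <= `|x|.
  by move=> x /tauP [s Ss {2}->]; apply: (sep_bound Slin S0 Hd (ltW d0)).
pose F := within T (nbhs z).
have PF : ProperFilter F by apply: within_nbhs_proper.
pose M := (`|z| + 1) / d.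
have FI : (tau @ F) `[- M, M]%classic.
  apply/nbhs_ballP; exists 1 => //= x; rewrite -ball_normE /= => bx Tx.
  rewrite in_itv /= -ler_norml /M ler_pdivlMr //; apply: le_trans (bnd _ Tx) _.
  have -> : x = z - (z - x) by rewrite subKr.
  by apply: le_trans (ler_normB _ _) _; rewrite lerD2l ltW.
have [t [_ clt]] := @segment_compact _ _ _ (tau @ F) _ FI.
suff Sz : S (z - t *: e0) by exists t, (z - t *: e0); split => //; rewrite addrC subrK.
apply: Scl => B /nbhs_ballP [eps eps0 epsB].
have ne0 : 0 < `|e0| + 1 by rewrite ltr_wpDl.
pose eta := eps / 2 / (`|e0| + 1).
have eta0 : 0 < eta by rewrite /eta !divr_gt0.
pose A := [set r | exists x, [/\ T x, `|z - x| < eps / 2 & r = tau x]].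
have GA : (tau @ F) A.
  apply/nbhs_ballP; exists (eps / 2); first by rewrite /= divr_gt0.
  by move=> x; rewrite -ball_normE /= => bx Tx; exists x.
have [r [[x [Tx hx ->]] hr]] := clt A (ball t eta) GA (nbhsx_ballx t eta eta0).
have [s Ss ex] := tauP x Tx.
exists s; split => //; apply: epsB; rewrite -ball_normE /=.
have -> : z - t *: e0 - s = (z - x) + (tau x - t) *: e0.
  by apply: vec_id1; rewrite {1}ex addrAC subrr add0r.
apply: le_lt_trans (ler_normD _ _) _; rewrite normrZ.
move: hr; rewrite -ball_normE /= distrC => hr.
have : `|tau x - t| * `|e0| <= eps / 2.
  apply: le_trans (_ : eta * (`|e0| + 1) <= _); last by rewrite /eta divfK ?gt_eqF.
  apply: ler_pM => //; first exact: ltW.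
  by rewrite lerDl.
by move=> h; rewrite (splitr eps); apply: ltr_leD.
Qed.
End FinDim2.
Section FinDim3.
Variables (R : realType) (X : normedModType R).

Lemma sum_recl_comb n (e : 'I_n.+1 -> X) (c : 'I_n -> R) t :
  \sum_(i < n.+1) (if unlift ord0 i is Some j then c j else t) *: e i =
  t *: e ord0 + \sum_(j < n) c j *: e (lift ord0 j).
Proof.
by rewrite big_ord_recl unlift_none; congr (_ + _); apply: eq_bigr => i _; rewrite liftK.
Qed.

Lemma fspan_bound n (e : 'I_n -> X) : closed (fspan e) /\
  exists2 M : R, 0 < M & forall x, fspan e x -> exists c : 'I_n -> R,
    x = \sum_(i < n) c i *: e i /\ forall i, `|c i| <= M * `|x|.
Proof.
elim: n e => [|n IH] e.
  have E0 : forall x, fspan e x -> x = 0 by move=> x [c ->]; rewrite big_ord0.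
  split.
    move=> z clz; have -> : z = 0.
      apply: le0_norm_eps => eps eps0.
      have [y [/E0 -> bz]] := clz _ (nbhsx_ballx z eps eps0).
      by move: bz; rewrite -ball_normE /= subr0 => /ltW.
    exact: fspan0.
  exists 1 => // x /E0 ->; exists (fun=> 0); split; first by rewrite big_ord0.
  by case.
have [Scl [M' M'0 HM']] := IH (e \o lift ord0).
set S := fspan (e \o lift ord0) in Scl HM'.
have Slin : forall k x y, S x -> S y -> S (k *: x + y) by move=> *; exact: fspan_lin.
have S0 : S 0 by exact: fspan0.
have [Se0|nSe0] := pselect (S (e ord0)).
  have ES : fspan e = S.
    apply/seteqP; split => x.
      by move=> /fspan_recl [t [s [Ss ->]]]; exact: Slin.
    by move=> Sx; apply/fspan_recl; exists 0, x; rewrite scale0r add0r.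
  split; first by rewrite ES.
  exists M' => // x; rewrite ES => /HM' [c [ex hc]].
  exists (fun i => if unlift ord0 i is Some j then c j else 0); split.
    by rewrite sum_recl_comb scale0r add0r.
  move=> i; case: (unlift ord0 i) => [j|] //.
  by rewrite normr0 mulr_ge0 // ltW.
have [d d0 Hd] : exists2 d : R, 0 < d & forall s, S s -> d <= `|e ord0 - s|.
  have : ~ closure S (e ord0) by move=> /Scl.
  move=> /existsNP [B /not_implyP [/nbhs_ballP [d d0 dB] SB]].
  exists d => // s Ss; rewrite leNgt; apply/negP => hs.
  by apply: SB; exists s; split => //; apply: dB; rewrite -ball_normE.
have ET : fspan e = [set x | exists t s, S s /\ x = t *: e ord0 + s].
  by apply/seteqP; split => x /fspan_recl.
split; first by rewrite ET; exact: (closed_extend Scl Slin S0 d0 Hd).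
pose M := d^-1 + M' * (1 + `|e ord0| / d).
have Mge : 0 < 1 + `|e ord0| / d.
  have h : 0 <= `|e ord0| / d by rewrite divr_ge0 // ltW.
  lra.
exists M; first by rewrite addr_gt0 ?invr_gt0 // mulr_gt0.
move=> x /fspan_recl [t [s [Ss ex]]].
have ht : `|t| * d <= `|x| by rewrite ex; exact: (sep_bound Slin S0 Hd (ltW d0)).
have ht' : `|t| <= `|x| / d by rewrite ler_pdivlMr.
have hs : `|s| <= (1 + `|e ord0| / d) * `|x|.
  have -> : s = x - t *: e ord0 by rewrite ex addrAC subrr add0r.
  apply: le_trans (ler_normB _ _) _; rewrite normrZ mulrDl mul1r lerD2l.
  rewrite mulrC -mulrA [_^-1 * _]mulrC; apply: ler_wpM2l => //.
have [c [es hc]] := HM' s Ss.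
exists (fun i => if unlift ord0 i is Some j then c j else t); split.
  by rewrite sum_recl_comb -es.
move=> i; case: (unlift ord0 i) => [j|].
  apply: le_trans (hc j) _; apply: le_trans (ler_wpM2l (ltW M'0) hs) _.
  rewrite mulrA; apply: ler_wpM2r => //; rewrite /M.
  have : 0 <= d^-1 by rewrite invr_ge0 ltW.
  lra.
apply: le_trans ht' _; rewrite mulrC; apply: ler_wpM2r => //; rewrite /M.
have : 0 <= M' * (1 + `|e ord0| / d) by rewrite mulr_ge0 // ltW.
lra.
Qed.
End FinDim3.
Section Lin.
Variables (R : realType) (X : normedModType R).
Definition linR (l : X -> R) := forall c u u', l (c *: u + u') = c * l u + l u'.

Variable (l : X -> R).
Hypothesis hl : linR l.

Lemma lin0 : l 0 = 0.
Proof.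
have := hl 1 0 0; rewrite scale1r addr0 mul1r => h; lra.
Qed.
Lemma linD u v : l (u + v) = l u + l v.
Proof. by rewrite -{1}[u]scale1r hl mul1r. Qed.
Lemma linZ c u : l (c *: u) = c * l u.
Proof. by rewrite -[c *: u]addr0 hl lin0 addr0. Qed.
Lemma linN u : l (- u) = - l u.
Proof. by rewrite -scaleN1r linZ mulN1r. Qed.
Lemma linB u v : l (u - v) = l u - l v.
Proof. by rewrite linD linN. Qed.
Lemma lin_sum n (c : 'I_n -> R) (e : 'I_n -> X) :
  l (\sum_(i < n) c i *: e i) = \sum_(i < n) c i * l (e i).
Proof.
rewrite (big_morph l linD lin0); apply: eq_bigr => i _; exact: linZ.
Qed.

Lemma lin_bound_cont (C : R) : (forall x, `|l x| <= C * `|x|) -> continuous l.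
Proof.
move=> hC x; apply/cvgrPdist_lt => eps eps0.
have C0 : 0 < `|C| + 1 by rewrite ltr_pwDr // normr_ge0.
apply/nbhs_ballP; exists (eps / (`|C| + 1)); first by rewrite /= divr_gt0.
move=> y; rewrite -ball_normE /= => hy; rewrite -linB.
apply: le_lt_trans (hC _) _; apply: le_lt_trans (_ : (`|C| + 1) * `|x - y| < _).
  apply: ler_wpM2r; first exact: normr_ge0.
  by apply: le_trans (ler_norm C) _; rewrite lerDl.
by rewrite mulrC -ltr_pdivlMr.
Qed.

Lemma findim_cont : findim X -> continuous l.
Proof.
move=> [n [e He]].
have [_ [M M0 HM]] := fspan_bound e.
apply: (@lin_bound_cont (M * \sum_(i < n) `|l (e i)|)) => x.
have [c [ex hc]] := HM x (He x).
rewrite ex lin_sum -ex; apply: le_trans (ler_norm_sum _ _ _) _.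
rewrite mulrAC mulr_sumr; apply: ler_sum => i _; rewrite normrM.
by apply: ler_wpM2r => //; exact: hc.
Qed.
End Lin.
Section Aux.
Variables (R : realType) (X : normedModType R).

Lemma lin_localbound (l : X -> R) (d B : R) : linR l -> 0 < d ->
  (forall u, `|u| < d -> l u <= B) -> forall u, `|l u| <= (2 * B / d) * `|u|.
Proof.
move=> hl d0 hB u.
have [->|u0] := eqVneq u 0; first by rewrite lin0 // !normr0 mulr0.
have nu0 : 0 < `|u| by rewrite normr_gt0.
pose k := d / (2 * `|u|).
have k0 : 0 < k by rewrite divr_gt0 // mulr_gt0.
have nw : `|k *: u| < d.
  rewrite normrZ gtr0_norm //.
  have -> : k * `|u| = d / 2 by rewrite /k; field; rewrite gt_eqF.
  lra.
have h1 := hB _ nw.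
have h2 : l (- (k *: u)) <= B by apply: hB; rewrite normrN.
rewrite linN // linZ // in h1 h2 *.
have hk : k * `|l u| <= B by rewrite -[k]gtr0_norm // -normrM ler_norml; apply/andP; split; lra.
have -> : 2 * B / d * `|u| = B / k by rewrite /k; field; rewrite ?gt_eqF.
by rewrite ler_pdivlMr // mulrC.
Qed.

Lemma cont_lin_bound (l : X -> R) : linR l -> continuous l ->
  exists C : R, forall u, `|l u| <= C * `|u|.
Proof.
move=> hl hc; have := hc 0 => /cvgrPdist_lt /(_ 1 ltr01).
rewrite lin0 // => /nbhs_ballP [d d0 hd]; exists (2 * 1 / d); apply: lin_localbound => // u hu.
have := hd u; rewrite -ball_normE /= sub0r normrN => /(_ hu).
by rewrite sub0r normrN => /ltW /(le_trans (ler_norm _)).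
Qed.

Lemma blin_linR (l : X -> R) : blin l -> linR l.
Proof. by move=> [hD [hZ _]] c u u'; rewrite hD hZ. Qed.
End Aux.
Section Min.
Variables (R : realType).

Lemma phi_ge (phi : nat -> nat) : {homo phi : m n / (m < n)%N >-> (m < n)%N} ->
  forall n, (n <= phi n)%N.
Proof. by move=> hphi; elim => // n IH; exact: leq_ltn_trans IH (hphi _ _ (ltnSn n)). Qed.

Lemma seq_lim_le (u : nat -> R) (L B : R) : u @ \oo --> L ->
  (forall eps, 0 < eps -> exists N, forall n, (N <= n)%N -> u n <= B + eps) -> L <= B.
Proof.
move=> /cvgrPdist_lt Hu HB; apply/ler_addgt0Pr => e e0.
have e20 : 0 < e / 2 by rewrite divr_gt0.
have [N1 _ HN1] := Hu _ e20.
have [N2 HN2] := HB _ e20.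
have h1 : `|L - u (maxn N1 N2)| < e / 2 by exact: (HN1 (maxn N1 N2) (leq_maxl _ _)).
have h2 := HN2 (maxn N1 N2) (leq_maxr _ _).
have h3 : L - u (maxn N1 N2) < e / 2 by apply: le_lt_trans (ler_norm _) h1.
lra.
Qed.

Variables (Y : normedModType R) (K : set Y) (ys : Y -> R).
Hypothesis ysK : forall k, K k -> 0 <= ys k.
Hypothesis ysD : forall u v, ys (u + v) = ys u + ys v.
Hypothesis ysc : continuous ys.

Lemma ysB u v : ys (u - v) = ys u - ys v.
Proof.
have h0 : ys 0 = 0 by have := ysD 0 0; rewrite addr0 => h; lra.
have hN : ys (- v) = - ys v by have := ysD v (- v); rewrite subrr h0 => h; lra.
by rewrite ysD hN.
Qed.

Lemma kmin (A : set Y) : Kseq_compact K A ->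
  exists2 a, A a & forall b, A b -> ys a <= ys b.
Proof.
move=> [[a0 Aa0] HA].
have key : forall a : nat -> Y, (forall n, A (a n)) -> exists2 l, A l &
    forall B, (forall eps, 0 < eps -> exists N, forall n, (N <= n)%N -> ys (a n) <= B + eps) ->
      ys l <= B.
  move=> a Aa; have [c [Kc [phi [hphi [l Al cv]]]]] := HA a Aa.
  exists l => // B HB.
  apply: (@seq_lim_le (fun n => ys (a (phi n) - c (phi n)))).
    by apply: continuous_cvg => //; apply: ysc.
  move=> eps eps0; have [N HN] := HB _ eps0; exists N => n Nn.
  rewrite ysB; apply: le_trans (HN _ (leq_trans Nn (phi_ge hphi n))).
  by rewrite lerBlDr lerDl ysK.
have [lb|nlb] := pselect (has_lbound (ys @` A)).
  have hinf : has_inf (ys @` A) by split => //; exists (ys a0), a0.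
  pose m := inf (ys @` A).
  have : forall n : nat, exists a, A a /\ ys a < m + n.+1%:R^-1.
    move=> n; have hpos : 0 < n.+1%:R^-1 :> R by rewrite invr_gt0 ltr0Sn.
    have [_ [a Aa <-] h] := inf_adherent hpos hinf.
    by exists a.
  move=> /choice [a Ha].
  have [l Al Hl] := key a (fun n => (Ha n).1).
  exists l => // b Ab; apply: le_trans (_ : m <= _); last first.
    by apply: ge_inf => //; exists b.
  apply: Hl => eps eps0; have [k hk] := ltr_add_invr eps0.
  exists k => n kn; apply: ltW; apply: lt_le_trans (Ha n).2 _.
  rewrite lerD2l; apply: le_trans (ltW hk); rewrite add0r.
  by rewrite lef_pV2 ?posrE ?ltr0Sn // ler_nat ltnS.
have : forall n : nat, exists a, A a /\ ys a < - n%:R.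
  move=> n; apply: contrapT => hn; apply: nlb; exists (- n%:R) => _ [a Aa <-].
  by rewrite leNgt; apply/negP => h; apply: hn; exists a.
move=> /choice [a Ha].
have [l Al Hl] := key a (fun n => (Ha n).1).
have : ys l <= ys l - 1.
  apply: Hl => eps eps0; exists (Num.truncn (1 - ys l)).+1 => n Nn.
  apply: ltW; apply: lt_le_trans (Ha n).2 _.
  have h1 := truncnS_gt (1 - ys l).
  have h2 : (Num.truncn (1 - ys l)).+1%:R <= n%:R :> R by rewrite ler_nat.
  lra.
lra.
Qed.
End Min.
Section Main.
Variables (R : realType) (X Y : normedModType R) (K : set Y) (ys : Y -> R).
Hypothesis ysK : forall k, K k -> 0 <= ys k.
Hypothesis ysb : blin ys.

Definition convexf (f : X -> R) := forall x y (lam : R), 0 < lam < 1 ->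
  f (lam *: x + (1 - lam) *: y) <= lam * f x + (1 - lam) * f y.

Lemma scal_exists (F : X -> set Y) : upper_Kconvex K F -> (forall x, Kseq_compact K (F x)) ->
  exists f : X -> R, [/\ forall x, exists2 a, F x a & f x = ys a,
    forall x b, F x b -> f x <= ys b & convexf f].
Proof.
move=> Fc Fk.
have [ysD [ysZ ysc]] := ysb.
have : forall x, exists a, F x a /\ forall b, F x b -> ys a <= ys b.
  by move=> x; have [a Fa Ha] := kmin ysK ysD ysc (Fk x); exists a.
move=> /choice [m Hm].
exists (ys \o m); split.
- by move=> x; exists (m x) => //; exact: (Hm x).1.
- by move=> x b Fb; exact: (Hm x).2.
- move=> x y lam hlam /=.
  have [c [k [Fc' [Kk e]]]] := Fc x y lam hlam _ _ (Hm x).1 (Hm y).1.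
  have h1 := (Hm _).2 _ Fc'.
  have : ys (lam *: m x + (1 - lam) *: m y) = ys c + ys k by rewrite e ysD.
  rewrite ysD !ysZ => ->; have := ysK Kk; lra.
Qed.

Lemma lc_bound (F : X -> set Y) (f : X -> R) x0 : lower_cont F x0 -> F x0 !=set0 ->
  (forall x b, F x b -> f x <= ys b) ->
  exists2 d : R, 0 < d & exists B, forall x, `|x0 - x| < d -> f x <= B.
Proof.
move=> hlc [a Fa] hf.
have [ysD [ysZ ysc]] := ysb.
have oV : open (ys @^-1` [set r | r < ys a + 1]).
  by move: ysc => /continuousP; apply; exact: open_lt.
have hV : F x0 `&` (ys @^-1` [set r | r < ys a + 1]) !=set0.
  by exists a; split => //=; rewrite ltrDl ltr01.
have [U nU HU] := hlc _ oV hV.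
move: nU => /nbhs_ballP [d d0 dU]; exists d => //; exists (ys a + 1) => x hx.
have hxU : U x by apply: dU; rewrite -ball_normE.
have [b [Fb Vb]] := HU x hxU; exact: le_trans (hf _ _ Fb) (ltW Vb).
Qed.

Lemma hatsub_of_sub (F : X -> set Y) (f h : X -> R) xb :
  (forall x, exists2 a, F x a & f x = ys a) -> (forall x b, F x b -> f x <= ys b) ->
  blin h -> (forall x, f xb + h (x - xb) <= f x) -> hatsub Rplus_cone (scomp ys F) xb h.
Proof.
move=> hm hlb hb hs; split => // eps e0; exists 1 => // x _ y k [a Fa <-] k0.
have [a' Fa' e'] := hm xb.
exists (ys a'), (ys a + k - ys a' - h (x - xb)), 0; split; first by exists a'.
split; first by rewrite /Rplus_cone /=; have := hs x; have := hlb _ _ Fa; rewrite /Rplus_cone /= in k0; lra.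
split; first by rewrite normr0 ler01.
by rewrite scaler0 addr0; lra.
Qed.
End Main.
Section MainB.
Variables (R : realType) (X Y : normedModType R) (K : set Y) (ys : Y -> R).
Hypothesis ysK : forall k, K k -> 0 <= ys k.
Hypothesis ysb : blin ys.

Lemma vec_id2 (x xb : X) (t : R) : t *: x + (1 - t) *: xb - xb = t *: (x - xb).
Proof.
by rewrite scalerBl scale1r scalerBr addrA addrAC addrK.
Qed.

Lemma scaleRE (a b : R) : a *: b = a * b.
Proof. by []. Qed.

Lemma eps_ge0 (h A : R) : 0 <= A -> (forall eps, 0 < eps -> - (eps * A) <= h) -> 0 <= h.
Proof.
move=> A0 H; apply/ler_addgt0Pr => e e0.
have A10 : 0 < A + 1 by rewrite ltr_wpDl.
have := H (e / (A + 1)) (divr_gt0 e0 A10).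
have : e / (A + 1) * A <= e.
  rewrite mulrAC ler_pdivrMr //; apply: ler_wpM2l; [exact: ltW | lra].
lra.
Qed.

Lemma main_scal (F1 F2 : X -> set Y) (xb : X) (T : X -> Y) :
  K 0 -> (forall x, F1 x !=set0) -> (forall x, F2 x !=set0) ->
  upper_Kconvex K F1 -> upper_Kconvex K F2 ->
  (forall x, Kseq_compact K (F1 x)) -> (forall x, Kseq_compact K (F2 x)) ->
  (exists x0, smap_cont F1 x0) \/ (exists x0, smap_cont F2 x0) \/ findim X ->
  hatsub K (smap_add F1 F2) xb T ->
  exists g1 g2 : X -> R, hatsub Rplus_cone (scomp ys F1) xb g1 /\
    hatsub Rplus_cone (scomp ys F2) xb g2 /\ ys \o T = g1 + g2.
Proof.
move=> K0 F1n F2n F1c F2c F1k F2k hcont [Tb hT].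
have ysl := blin_linR ysb; have [ysD [ysZ ysc]] := ysb.
have [TD [TZ Tc]] := Tb.
have [f1 [m1 lb1 cv1]] := scal_exists ysK ysb F1c F1k.
have [f2 [m2 lb2 cv2]] := scal_exists ysK ysb F2c F2k.
pose g := ys \o T.
have gl : linR g by move=> c u u'; rewrite /g /= TD TZ ysD ysZ.
have gc : continuous g by move=> x; apply: continuous_comp; [exact: Tc | exact: ysc].
have [Cy hCy] := cont_lin_bound ysl ysc.
have loc : forall eps, 0 < eps -> exists2 d : R, 0 < d & forall x, `|x - xb| < d ->
    f1 xb + f2 xb + g (x - xb) - eps * `|Cy| * `|x - xb| <= f1 x + f2 x.
  move=> eps e0; have [d d0 hd] := hT eps e0; exists d => // x hx.
  have [a1 F1a1 e1] := m1 x; have [a2 F2a2 e2] := m2 x.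
  have hsum : smap_add F1 F2 x (a1 + a2) by exists a1, a2.
  have [y' [k' [b [[c1 [c2 [Fc1 [Fc2 ey']]]] [Kk' [nb E]]]]]] := hd x hx _ _ hsum K0.
  have := congr1 ys E; rewrite addr0 !ysD ysZ ey' ysD -e1 -e2 => {}E.
  have h1 := lb1 _ _ Fc1; have h2 := lb2 _ _ Fc2; have h3 := ysK Kk'.
  have hb : - `|Cy| <= ys b.
    have hc : Cy * `|b| <= `|Cy|.
      apply: le_trans (ler_wpM2r (normr_ge0 b) (ler_norm Cy)) _.
      by rewrite ler_piMr.
    have := hCy b; have := ler_norm (- ys b); rewrite normrN => /=; lra.
  have hP : 0 <= eps * `|x - xb| by rewrite mulr_ge0 // ltW.
  have := ler_wpM2l hP hb; move: E; rewrite /g /= scaleRE => /=; lra.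
have g0 : g 0 = 0 by exact: lin0.
have sub : forall x, f1 xb + f2 xb + g (x - xb) <= f1 x + f2 x.
  move=> x; have [->|xn] := eqVneq x xb; first by rewrite subrr g0 addr0.
  have nw : 0 < `|x - xb| by rewrite normr_gt0 subr_eq0.
  suff : 0 <= f1 x + f2 x - f1 xb - f2 xb - g (x - xb) by lra.
  apply: (@eps_ge0 _ (`|Cy| * `|x - xb|)); first by rewrite mulr_ge0.
  move=> eps e0; have [d d0 hd] := loc eps e0.
  pose t := d / (d + `|x - xb|).
  have dn0 : 0 < d + `|x - xb| by rewrite addr_gt0.
  have t0 : 0 < t by rewrite divr_gt0.
  have t1 : t < 1 by rewrite ltr_pdivrMr // mul1r ltrDl.
  have t01 : 0 < t < 1 by rewrite t0 t1.
  pose z := t *: x + (1 - t) *: xb.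
  have ez : z - xb = t *: (x - xb) by exact: vec_id2.
  have hz : `|z - xb| < d.
    rewrite ez normrZ gtr0_norm // /t mulrAC ltr_pdivrMr //; nra.
  have := hd z hz; rewrite ez (linZ gl) normrZ gtr0_norm //.
  have := cv1 x xb t t01; have := cv2 x xb t t01; rewrite -/z => c2 c1 h.
  have : t * (f1 x + f2 x - f1 xb - f2 xb - g (x - xb) + eps * (`|Cy| * `|x - xb|)) >= 0.
    lra.
  rewrite pmulr_rge0 // => /=; lra.
pose H1 u := f1 (xb + u) - f1 xb - g u.
pose H2 v := f2 (xb + v) - f2 xb.
pose Phi u v := H1 (u + v) + H2 v.
have vA : forall (lam : R) (a b : X), xb + (lam *: a + (1 - lam) *: b) =
    lam *: (xb + a) + (1 - lam) *: (xb + b).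
  move=> lam a b; rewrite !scalerDr addrACA -scalerDl.
  by rewrite [lam + _]addrC subrK scale1r.
have vB : forall (lam : R) (p q p' q' : X),
    lam *: p + (1 - lam) *: p' + (lam *: q + (1 - lam) *: q') =
    lam *: (p + q) + (1 - lam) *: (p' + q').
  by move=> lam p q p' q'; rewrite !scalerDr addrACA.
have PhiC : forall lam : R, 0 < lam < 1 -> forall p q p' q',
    Phi (lam *: p + (1 - lam) *: p') (lam *: q + (1 - lam) *: q')
      <= lam * Phi p q + (1 - lam) * Phi p' q'.
  move=> lam hl p q p' q'; rewrite /Phi /H1 /H2 vB !vA.
  have := cv1 (xb + (p + q)) (xb + (p' + q')) lam hl.
  have := cv2 (xb + q) (xb + q') lam hl.
  have -> : g (lam *: (p + q) + (1 - lam) *: (p' + q')) =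
      lam * g (p + q) + (1 - lam) * g (p' + q').
    by rewrite (linD gl) !(linZ gl).
  lra.
have Phi0 : forall v, 0 <= Phi 0 v.
  move=> v; rewrite /Phi /H1 /H2 add0r; have := sub (xb + v).
  have -> : xb + v - xb = v by rewrite addrAC subrr add0r.
  lra.
have [l [hl hlPhi]] := hahn_banach_conv PhiC Phi0.
have hl' : linR l := hl.
have [Cg hCg] := cont_lin_bound gl gc.
have lc : continuous l.
  case: hcont => [[x0 [lc1 _]]|[[x0 [lc2 _]]|fd]]; last exact: findim_cont.
  - have [d d0 [B hB]] := lc_bound ysb lc1 (F1n x0) lb1.
    pose B' := B - f1 xb + `|Cg| * (d + `|x0 - xb|) + H2 (x0 - xb).
    apply: (lin_bound_cont hl' (lin_localbound (B := B') hl' d0 _)) => u hu.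
    apply: le_trans (hlPhi u (x0 - xb)) _; rewrite /Phi /H1 /B'.
    have -> : xb + (u + (x0 - xb)) = x0 + u by rewrite addrCA [xb + _]addrC subrK addrC.
    have h1 : f1 (x0 + u) <= B by apply: hB; rewrite opprD addNKr normrN.
    have h2 : - g (u + (x0 - xb)) <= `|Cg| * (d + `|x0 - xb|).
      apply: le_trans (_ : `|g (u + (x0 - xb))| <= _); first by rewrite -normrN ler_norm.
      apply: le_trans (hCg _) _; apply: le_trans (ler_wpM2r (normr_ge0 _) (ler_norm Cg)) _.
      apply: ler_wpM2l => //; apply: le_trans (ler_normD _ _) _.
      by rewrite lerD2r ltW.
    lra.
  - have [d d0 [B hB]] := lc_bound ysb lc2 (F2n x0) lb2.
    pose B' := H1 (x0 - xb) + B - f2 xb.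
    apply: (lin_bound_cont hl' (lin_localbound (B := B') hl' d0 _)) => u hu.
    apply: le_trans (hlPhi u (x0 - xb - u)) _; rewrite /Phi /H2 /B'.
    have -> : u + (x0 - xb - u) = x0 - xb by rewrite addrC subrK.
    have -> : xb + (x0 - xb - u) = x0 - u by rewrite addrA [xb + _]addrC subrK.
    have h1 : f2 (x0 - u) <= B by apply: hB; rewrite opprB addrC subrK.
    lra.
exists (fun x => g x + l x), (fun x => - l x); split; last split.
- apply: hatsub_of_sub m1 lb1 _ _.
    split; first by move=> u v /=; rewrite (linD gl) (linD hl'); lra.
    split; first by move=> a u /=; rewrite (linZ gl) (linZ hl') scaleRE; lra.
    by move=> x; apply: cvgD; [exact: gc | exact: lc].
  move=> x; have := hlPhi (x - xb) 0; rewrite /Phi /H1 /H2 !addr0.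
  by rewrite [xb + _]addrC subrK => /=; lra.
- apply: hatsub_of_sub m2 lb2 _ _.
    split; first by move=> u v /=; rewrite (linD hl'); lra.
    split; first by move=> a u /=; rewrite (linZ hl') scaleRE; lra.
    by move=> x; apply: cvgN; exact: lc.
  move=> x; have := hlPhi (- (x - xb)) (x - xb); rewrite /Phi /H1 /H2 addNr addr0 g0.
  by rewrite [xb + _]addrC subrK (linN hl') => /=; lra.
- by apply/funext => x /=; rewrite addrK.
Qed.
End MainB.

Unset Implicit Arguments.

Theorem mainTheorem7 (R : realType) (X Y : normedModType R) (K : set Y)
  (F1 F2 : X -> set Y) :
  pointed_closed_convex_cone K ->
  (forall x, F1 x !=set0) -> (forall x, F2 x !=set0) ->
  upper_Kconvex K F1 -> upper_Kconvex K F2 ->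
  (forall x, Kseq_compact K (F1 x)) -> (forall x, Kseq_compact K (F2 x)) ->
  (exists x0, smap_cont F1 x0) \/ (exists x0, smap_cont F2 x0) \/ findim X ->
  forall (xb : X) (ys : Y -> R), dual_cone K ys -> ys <> (fun _ => 0) ->
  forall T, hatsub K (smap_add F1 F2) xb T ->
    exists g1 g2 : X -> R,
      hatsub Rplus_cone (scomp ys F1) xb g1 /\
      hatsub Rplus_cone (scomp ys F2) xb g2 /\
      ys \o T = g1 + g2.
Proof.
move=> [_ [K0 _]] F1n F2n F1c F2c F1k F2k hcont xb ys [ysb ysK] _ T hT.
exact: (main_scal ysK ysb K0 F1n F2n F1c F2c F1k F2k hcont hT).
Qed.
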